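(* Let $F$ be a graph and let $(G,\varphi)$ and $(H,\phi)$ be two $k$-token reconstructions of $F$. Then $G\simeq H$ if and only if there exists an automorphism $\psi$ of $F$ such that $\mathcal{R}_\phi=\{\psi(X):X\in\mathcal{R}_\varphi\}$.
   Context: $F_k(G)$ is the graph on the $k$-subsets of $V(G)$ with $A,B$ adjacent iff $A\triangle B$ is an edge of $G$. A $k$-token reconstruction of $F$ is a pair $(G',\varphi)$ with $\varphi$ an isomorphism $F\to F_k(G')$. For $u\in V(G)$, $\kappa_G(u,k)=\{A\in V(F_k(G)):u\in A\}$, and for a reconstruction $(G,\varphi)$, $\mathcal{R}_\varphi=\{\varphi^{-1}(\kappa_G(u,k)):u\in V(G)\}$ (similarly $\mathcal{R}_\phi=\{\phi^{-1}(\kappa_H(u,k)):u\in V(H)\}$). *)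

(* Defs.v *)
From mathcomp Require Import all_boot.
Set Implicit Arguments. Unset Strict Implicit. Unset Printing Implicit Defensive.

Definition simple_graph (T : finType) (e : rel T) : Prop :=
  symmetric e /\ irreflexive e.

(* The k-subsets of W: vertex set of the token graph F_k(G). *)
Definition tok (W : finType) (k : nat) := {A : {set W} | #|A| == k}.

Definition token_adj (W : finType) (e : rel W) (k : nat) : rel (tok W k) :=
  fun A B => [exists u : W, exists v : W,
     e u v && ((val A :\: val B) :|: (val B :\: val A) == [set u; v])].

Definition is_iso (T1 T2 : finType) (e1 : rel T1) (e2 : rel T2) (f : T1 -> T2) : Prop :=
  bijective f /\ forall x y, e2 (f x) (f y) = e1 x y.

Definition isomorphic (T1 T2 : finType) (e1 : rel T1) (e2 : rel T2) : Prop :=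
  exists f : T1 -> T2, is_iso e1 e2 f.

Definition token_reconstruction (V W : finType) (eF : rel V) (eG : rel W) (k : nat)
  (phi : V -> tok W k) : Prop := @is_iso V (tok W k) eF (@token_adj W eG k) phi.

Definition kappa (W : finType) (k : nat) (u : W) : {set tok W k} :=
  [set A : tok W k | u \in val A].

Definition Rset (V W : finType) (k : nat) (phi : V -> tok W k) : {set {set V}} :=
  [set phi @^-1: @kappa W k u | u : W].

(* Main.v *)
Require Import Defs.
From mathcomp Require Import all_boot zify.
Set Implicit Arguments. Unset Strict Implicit. Unset Printing Implicit Defensive.

Definition adjS (W : finType) (e : rel W) (A B : {set W}) :=
  [exists u : W, exists v : W, e u v && ((A :\: B) :|: (B :\: A) == [set u; v])].

Lemma adj_map (W1 W2 : finType) (eG : rel W1) (eH : rel W2) (f : W1 -> W2) (fi : W2 -> W1) :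
  cancel f fi -> cancel fi f -> (forall x y, eH (f x) (f y) = eG x y) ->
  forall A B : {set W1}, adjS eH (f @: A) (f @: B) = adjS eG A B.
Proof.
move=> fK fiK fe A B.
have finj : injective f := can_inj fK.
have sd : (f @: A :\: f @: B) :|: (f @: B :\: f @: A) = f @: ((A :\: B) :|: (B :\: A)).
  by apply/setP => v; rewrite -[v]fiK !inE !mem_imset // !inE.
rewrite /adjS sd; apply/existsP/existsP.
  case=> u /existsP [v /andP [e1 /eqP e2]]; exists (fi u); apply/existsP; exists (fi v).
  rewrite -fe !fiK e1 /=; apply/eqP; apply: (imset_inj finj).
  by rewrite e2 imsetU1 imset_set1 !fiK.
case=> x /existsP [y /andP [e1 /eqP e2]]; exists (f x); apply/existsP; exists (f y).
by rewrite fe e1 e2 imsetU1 imset_set1 /=; apply/eqP.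
Qed.

Lemma adj_two (W : finType) (e : rel W) (u u' : W) (C : {set W}) :
  symmetric e -> irreflexive e -> u != u' -> u \notin C -> u' \notin C ->
  adjS e (u |: C) (u' |: C) = e u u'.
Proof.
move=> es ei nu uC u'C.
have sd : ((u |: C) :\: (u' |: C)) :|: ((u' |: C) :\: (u |: C)) = [set u; u'].
  apply/setP => z; rewrite !inE.
  have [->|zu] := eqVneq z u; first by rewrite (negbTE uC) (negbTE nu).
  have [->|zu'] := eqVneq z u'; first by rewrite (negbTE u'C).
  by case: (z \in C).
rewrite /adjS sd; apply/existsP/idP.
  case=> x /existsP [y /andP [e1 /eqP e2]].
  have hx : x \in [set u; u'] by rewrite e2 !inE eqxx.
  have hy : y \in [set u; u'] by rewrite e2 !inE eqxx orbT.
  move: hx hy; rewrite !inE => /orP [] /eqP hx /orP [] /eqP hy; subst x y.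
  - by move: e1; rewrite ei.
  - done.
  - by rewrite es.
  - by move: e1; rewrite ei.
by move=> h; exists u; apply/existsP; exists u'; rewrite h eqxx.
Qed.

Lemma sub_card (T : finType) (S : {set T}) m : m <= #|S| ->
  exists B : {set T}, B \subset S /\ #|B| = m.
Proof.
move=> hm; exists [set x in take m (enum S)]; split.
  by apply/subsetP => x; rewrite inE => /mem_take; rewrite mem_enum.
rewrite cardsE; move/card_uniqP: (take_uniq m (enum_uniq (mem S))) => ->.
by rewrite size_takel // -cardE.
Qed.
Lemma avoid2 (W : finType) (k : nat) (u u' : W) : u != u' -> 0 < k < #|W| ->
  exists C : {set W}, [/\ u \notin C, u' \notin C & #|C| = k.-1].
Proof.
move=> nu hk.
have hc : #|~: [set u; u']| = #|W| - 2.
  have := cardsC [set u; u']; rewrite cards2 nu; lia.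
have hk1 : k.-1 <= #|~: [set u; u']| by rewrite hc; lia.
have [B [sB cB]] := sub_card hk1.
exists B; split => //; apply/negP => /(subsetP sB); rewrite !inE eqxx //= orbT //.
Qed.

Lemma kpre_inj (V W : finType) k (phi : V -> tok W k) : bijective phi -> 0 < k < #|W| ->
  injective (fun u => phi @^-1: kappa k u).
Proof.
move=> [phii pK piK] hk u u' /= E; apply/eqP; apply/negPn/negP => nu.
have [C [uC u'C cC]] := avoid2 nu hk.
have cA : #|u |: C| == k by rewrite cardsU1 uC cC; apply/eqP; lia.
pose a : tok W k := exist _ (u |: C) cA.
move/setP: E => /(_ (phii a)); rewrite !inE piK /= !inE eqxx /= eq_sym (negbTE nu) /=.
by rewrite (negbTE u'C).
Qed.

Definition tokmap (W1 W2 : finType) k (f : W1 -> W2) (fi : injective f) (A : tok W1 k) : tok W2 k :=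
  exist _ (f @: val A) (eq_ind_r (fun n => n == k) (valP A) (card_imset (mem (val A)) fi)).

Theorem proposition15 (V W1 W2 : finType) (eF : rel V) (eG : rel W1) (eH : rel W2)
  (k : nat) (phiG : V -> tok W1 k) (phiH : V -> tok W2 k) :
  simple_graph eF -> simple_graph eG -> simple_graph eH ->
  0 < k < #|W1| -> 0 < k < #|W2| ->
  token_reconstruction eF eG phiG -> token_reconstruction eF eH phiH ->
  (isomorphic eG eH <->
   exists psi : V -> V, is_iso eF eF psi /\
     Rset phiH = [set psi @: X | X : {set V} in Rset phiG]).
Proof.
move=> _ [eGs eGi] [eHs eHi] hk1 hk2 [[phiGi pGK pGiK] eGF] [[phiHi pHK pHiK] eHF]; split.
- case=> f [[fi fK fiK] fe].
  have finj := can_inj fK.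
  pose psi x := phiHi (tokmap finj (phiG x)).
  have h x : val (phiH (psi x)) = f @: val (phiG x) by rewrite /psi pHiK.
  have psiinj : injective psi.
    move=> x y /(can_inj pHiK) /(congr1 val) /= /(imset_inj finj) /val_inj.
    exact: (can_inj pGK).
  have [psii psiK psiiK] := injF_bij psiinj.
  exists psi; split.
    split; first by exists psii.
    move=> x y; rewrite -eHF -eGF.
    change (adjS eH (val (phiH (psi x))) (val (phiH (psi y)))
           = adjS eG (val (phiG x)) (val (phiG y))).
    by rewrite !h (adj_map fK fiK fe).
  have E u : psi @: (phiG @^-1: kappa k u) = phiH @^-1: kappa k (f u).
    apply/setP => x; rewrite (can2_imset_pre _ psiK psiiK) !inE.
    have -> : phiH x = phiH (psi (psii x)) by rewrite psiiK.
    by rewrite h mem_imset.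
  apply/setP => S; apply/imsetP/imsetP.
    case=> v _ ->; exists (phiG @^-1: kappa k (fi v)).
      by apply/imsetP; exists (fi v).
    by rewrite E fiK.
  by case=> X /imsetP [u _ ->] ->; exists (f u) => //; rewrite E.
- case=> psi [[[psii psiK psiiK] psie] Req].
  have psiinj := can_inj psiK.
  have injG := kpre_inj (Bijective pGK pGiK) hk1.
  have injH := kpre_inj (Bijective pHK pHiK) hk2.
  have gex u : exists v, phiH @^-1: kappa k v == psi @: (phiG @^-1: kappa k u).
    have : psi @: (phiG @^-1: kappa k u) \in Rset phiH.
      rewrite Req; apply/imsetP; exists (phiG @^-1: kappa k u) => //.
      by apply/imsetP; exists u.
    by case/imsetP => v _ e; exists v; rewrite e.
  pose g u := xchoose (gex u).
  have gP u : phiH @^-1: kappa k (g u) = psi @: (phiG @^-1: kappa k u) := eqP (xchooseP (gex u)).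
  have ginj : injective g.
    move=> u u' e; apply: injG => /=; apply: (imset_inj psiinj).
    by rewrite -!gP e.
  have gsurj v : exists u, g u == v.
    have : phiH @^-1: kappa k v \in Rset phiH by apply/imsetP; exists v.
    rewrite Req => /imsetP [X /imsetP [u _ ->] e]; exists u; apply/eqP; apply: injH => /=.
    by rewrite gP e.
  have h x : val (phiH (psi x)) = g @: val (phiG x).
    apply/setP => v; have [u /eqP <-] := gsurj v; rewrite mem_imset //.
    move/setP: (gP u) => /(_ (psi x)); rewrite mem_imset // !inE.
    done.
  pose gi v := xchoose (gsurj v).
  have giK : cancel gi g := fun v => eqP (xchooseP (gsurj v)).
  have gK : cancel g gi := fun u => ginj _ _ (giK (g u)).
  exists g; split; first by exists gi.
  move=> u u'; case: (eqVneq u u') => [<-|nu]; first by rewrite eGi eHi.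
  have [C [uC u'C cC]] := avoid2 nu hk1.
  have cA : #|u |: C| == k by rewrite cardsU1 uC cC; apply/eqP; lia.
  have cB : #|u' |: C| == k by rewrite cardsU1 u'C cC; apply/eqP; lia.
  pose a : tok W1 k := exist _ (u |: C) cA.
  pose b : tok W1 k := exist _ (u' |: C) cB.
  have := psie (phiGi a) (phiGi b); rewrite -eHF -eGF !pGiK.
  change (adjS eH (val (phiH (psi (phiGi a)))) (val (phiH (psi (phiGi b))))
          = adjS eG (u |: C) (u' |: C) -> eH (g u) (g u') = eG u u').
  rewrite !h !pGiK /= !imsetU1 (adj_two eGs eGi nu uC u'C).
  rewrite (adj_two (u:=g u) (u':=g u') (C:=g @: C) eHs eHi) //.
  + by rewrite (inj_eq ginj).
  + by rewrite mem_imset.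
  + by rewrite mem_imset.
Qed.
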